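(* The two-step nilpotent Lie algebra $N$ is decomposable if and only if there are bases $\hat X$ and $\hat I$ such that the generating hypergraph $G$ is not connected.
   Context: Let $N$ be a two-step nilpotent Lie algebra over the complex numbers with a set of $q$ generators $\hat X = \{ \mathbf{x}_1, \cdots, \mathbf{x}_q \}$, and with center $I$ having a basis $\hat I = \{ \mathbf{y}_1, \cdots, \mathbf{y}_p \}$. Let $X = \mathrm{Span}\, \hat X$, so that $N = X \oplus I$, and assume $q, p \ge 2$ (so $\dim N = q+p$). The generating hypergraph $G$ of $N$ (with respect to these bases) is the bipartite hypergraph with the two vertex sets $\hat X$ and $\hat I$, where, whenever $[\mathbf{x}_i, \mathbf{x}_j] = \sum_{k=1}^p \alpha_k \mathbf{y}_k$ with not all $\alpha_k$ zero, $G$ has the multi-vertex hyper-edge $(\mathbf{x}_i, \mathbf{x}_j; \mathbf{y}_k : \alpha_k \neq 0)$. It is assumed that each $\mathbf{y}_k$ lies in at least one three-vertex hyper-edge $(\mathbf{x}_i, \mathbf{x}_j, \mathbf{y}_k)$ (achievable by a linear change of basis of $I$). *)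

(* Defs.v *)
From HB Require Import structures.
From mathcomp Require Import all_boot all_order all_algebra.
From mathcomp Require Import complex.
From mathcomp Require Import reals.
Set Implicit Arguments. Unset Strict Implicit. Unset Printing Implicit Defensive.
Import Order.TTheory GRing.Theory Num.Theory.
Local Open Scope ring_scope.

Section TwoStep.
Variable (F : fieldType) (V : vectType F).
Variable br : V -> V -> V.

(* Two-step nilpotent Lie bracket: bilinear, alternating, [[u,v],w] = 0.
   (Jacobi holds trivially, antisymmetry follows from alternation.) *)
Definition two_step_bracket : Prop :=
  [/\ forall (a : F) u v w, br (a *: u + v) w = a *: br u w + br v w,
      forall (a : F) u v w, br u (a *: v + w) = a *: br u v + br u w,
      forall u, br u u = 0
    & forall u v w, br (br u v) w = 0].

Definition is_ideal (A : {vspace V}) : Prop :=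
  forall a v, a \in A -> br a v \in A.

Definition decomposable : Prop :=
  exists A B : {vspace V},
    [/\ A != 0%VS, B != 0%VS, (A + B)%VS = fullv, (A :&: B)%VS = 0%VS &
        (is_ideal A /\ is_ideal B)].

Definition is_center (U : {vspace V}) : Prop :=
  forall v, v \in U <-> (forall u, br v u = 0).

Variables (q p : nat) (x : q.-tuple V) (y : p.-tuple V).

(* Vertices of the generating hypergraph: inl i = x_i, inr k = y_k. *)
Definition vertex := ('I_q + 'I_p)%type.

(* The hyper-edge (x_i, x_j; y_k : alpha_k <> 0) where
   [x_i, x_j] = sum_k alpha_k y_k. *)
Definition hedge (i j : 'I_q) : {set vertex} :=
  [set inl i; inl j] :|: [set inr k | k : 'I_p & coord y k (br x`_i x`_j) != 0].

Definition hedges : {set {set vertex}} :=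
  [set hedge ij.1 ij.2 | ij : 'I_q * 'I_q & br x`_(ij.1) x`_(ij.2) != 0].

Definition hadj : rel vertex :=
  fun u v => [exists e in hedges, (u \in e) && (v \in e)].

Definition hconnected : Prop := forall u v : vertex, connect hadj u v.

(* Standing conventions on the bases: X^ = x and I^ = y together form a basis
   of N (so N = X (+) I with X = span x), y is a basis of the center I, and
   every y_k lies in some three-vertex hyper-edge (x_i, x_j, y_k). *)
Definition admissible_bases : Prop :=
  [/\ basis_of fullv (x ++ y),
      free y,
      is_center <<y>>%VS
    & forall k : 'I_p, exists i j : 'I_q,
        br x`_i x`_j != 0 /\ hedge i j = [set inl i; inl j; inr k]].

End TwoStep.

(* Main.v *)
Require Import Defs.
From HB Require Import structures.
From mathcomp Require Import all_boot all_order all_algebra.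
From mathcomp Require Import complex reals.
From mathcomp Require Import zify.
Set Implicit Arguments. Unset Strict Implicit. Unset Printing Implicit Defensive.
Import Order.TTheory GRing.Theory Num.Theory.
Local Open Scope ring_scope.

Section Gen.
Variables (F : fieldType) (V : vectType F) (br : V -> V -> V).
Hypothesis Hbr : two_step_bracket br.

Lemma br0l w : br 0 w = 0.
Proof.
case: Hbr => H1 _ _ _.
by have := H1 (-1) 0 0 w; rewrite !scaleN1r oppr0 addr0 addNr.
Qed.

Lemma br0r w : br w 0 = 0.
Proof.
case: Hbr => _ H2 _ _.
by have := H2 (-1) w 0 0; rewrite !scaleN1r oppr0 addr0 addNr.
Qed.

Lemma brDl u v w : br (u + v) w = br u w + br v w.
Proof. by case: Hbr => H1 _ _ _; have := H1 1 u v w; rewrite !scale1r. Qed.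
Lemma brZl a u w : br (a *: u) w = a *: br u w.
Proof. case: Hbr => H1 _ _ _; have := H1 a u 0 w; by rewrite addr0 br0l addr0. Qed.
Lemma brDr u v w : br w (u + v) = br w u + br w v.
Proof. by case: Hbr => _ H2 _ _; have := H2 1 w u v; rewrite !scale1r. Qed.
Lemma brZr a u w : br w (a *: u) = a *: br w u.
Proof. by case: Hbr => _ H2 _ _; have := H2 a w u 0; rewrite addr0 br0r addr0. Qed.
Lemma brN u v : br u v = - br v u.
Proof.
case: Hbr => _ _ H3 _.
have := H3 (u + v); rewrite brDl !brDr !H3 add0r addr0 => /eqP.
by rewrite addr_eq0 => /eqP.
Qed.
Lemma brlin_l a u v w : br (a *: u + v) w = a *: br u w + br v w.
Proof. by rewrite brDl brZl. Qed.
Lemma brlin_r a u v w : br w (a *: u + v) = a *: br w u + br w v.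
Proof. by rewrite brDr brZr. Qed.

End Gen.

Section Span.
Variables (F : fieldType) (V : vectType F).

Lemma span_ind (X : seq V) (P : V -> Prop) :
  P 0 -> (forall a u w, P u -> P w -> P (a *: u + w)) ->
  (forall u, u \in X -> P u) -> forall v, v \in <<X>>%VS -> P v.
Proof.
move=> P0 Pc PX v /(@coord_span _ _ _ (in_tuple X)) ->.
apply: (big_rec (fun w => P w)) => // i w _ Pw; apply: Pc => //.
by apply: PX; apply: mem_nth; exact: ltn_ord.
Qed.

Fixpoint extract (X : seq V) : seq V :=
  if X is v :: X' then
    (if v \in <<extract X'>>%VS then extract X' else v :: extract X')
  else [::].

Lemma extract_span X : <<extract X>>%VS = <<X>>%VS.
Proof.
elim: X => //= v X IH; case: ifP => H; last by rewrite !span_cons IH.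
by rewrite span_cons -IH; apply/esym/addv_idPr; rewrite -memvE.
Qed.

Lemma extract_free X : free (extract X).
Proof. elim: X => [|v X IH] /=; first exact: nil_free. by case: ifP => H //; rewrite free_cons H IH. Qed.

Lemma extract_sub X : {subset extract X <= X}.
Proof.
elim: X => //= v X IH u; case: ifP => _; first by move/IH; rewrite inE orbC => ->.
by rewrite !inE => /orP[->|/IH ->] //; rewrite orbT.
Qed.

End Span.

Section Conn.
Variables (F : fieldType) (V : vectType F) (br : V -> V -> V) (q p : nat)
  (x : q.-tuple V) (y : p.-tuple V).
Hypothesis Hbr : two_step_bracket br.
Hypothesis Had : admissible_bases br x y.

Definition vec (w : vertex q p) : V := match w with inl i => x`_i | inr k => y`_k end.

Lemma vec_mem w : vec w \in x ++ y.
Proof. by rewrite mem_cat; case: w => i /=; rewrite mem_nth ?orbT // size_tuple. Qed.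

Lemma mem_vec u : u \in x ++ y -> exists w, u = vec w.
Proof.
rewrite mem_cat => /orP[] /tnthP [i ->];
  [exists (inl i) | exists (inr i)]; by rewrite /= (tnth_nth 0).
Qed.

Lemma full_span : fullv = <<x ++ y>>%VS.
Proof. by case: Had => Hb _ _ _; rewrite (span_basis Hb). Qed.

Lemma vec_neq0 w : vec w != 0.
Proof. by case: Had => Hb _ _ _; apply: (basis_not0 Hb); apply: vec_mem. Qed.

Lemma cent u v : u \in <<y>>%VS -> br u v = 0.
Proof. by case: Had => _ _ Hc _ /Hc; apply. Qed.

Lemma br_in_y u v : br u v \in <<y>>%VS.
Proof. by case: Had => _ _ Hc _; apply/Hc => w; case: Hbr. Qed.

Lemma in_hedge (i j : 'I_q) (k : 'I_p) : br x`_i x`_j != 0 -> coord y k (br x`_i x`_j) != 0 ->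
  hadj br x y (inl i) (inr k).
Proof.
move=> Hne Hk; apply/existsP; exists (hedge br x y i j).
apply/andP; split; first by apply/imsetP; exists (i, j) => //; rewrite inE.
rewrite /hedge; apply/andP; split; apply/setUP.
  by left; rewrite !inE eqxx.
by right; apply/imsetP; exists k => //; rewrite inE.
Qed.

Lemma ideal_closed (P : pred (vertex q p)) :
  (forall w w', hadj br x y w w' -> P w -> P w') ->
  is_ideal br <<[seq vec w | w <- enum P]>>%VS.
Proof.
move=> Pcl a v Ha; set S := <<_>>%VS.
have Hv : v \in <<x ++ y>>%VS by rewrite -full_span memvf.
apply: (span_ind (P := fun a => forall v, v \in <<x++y>>%VS -> br a v \in S)) a Ha v Hv.
- by move=> v _; rewrite br0l // mem0v.
- by move=> c u1 u2 H1 H2 v Hv; rewrite brlin_l // memvD // ?memvZ // ?H1 ?H2.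
move=> u /mapP [w]; rewrite mem_enum => Pw -> v Hv.
apply: (span_ind (P := fun v => br (vec w) v \in S)) v Hv.
- by rewrite br0r // mem0v.
- by move=> c v1 v2 H1 H2; rewrite brlin_r // memvD // memvZ.
move=> u' /mem_vec [w' ->].
case: w Pw => [i|k] Pw; last by rewrite /= cent ?mem0v // memv_span // mem_nth // size_tuple.
case: w' => [j|l] /=; last by rewrite brN // cent ?oppr0 ?mem0v // memv_span // mem_nth // size_tuple.
case: (eqVneq (br x`_i x`_j) 0) => [->|Hne]; first exact: mem0v.
rewrite (coord_span (br_in_y x`_i x`_j)) memv_suml // => k _.
case: (eqVneq (coord y k (br x`_i x`_j)) 0) => [->|Hk]; first by rewrite scale0r mem0v.
apply: memvZ; apply: memv_span; apply/mapP; exists (inr k) => //.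
rewrite mem_enum.
exact: (Pcl (inl i)) (in_hedge Hne Hk) Pw.
Qed.

End Conn.

Section Conn2.
Variables (F : fieldType) (V : vectType F) (br : V -> V -> V) (q p : nat)
  (x : q.-tuple V) (y : p.-tuple V).
Hypothesis Hbr : two_step_bracket br.
Hypothesis Had : admissible_bases br x y.

Lemma hadj_sym w w' : hadj br x y w w' = hadj br x y w' w.
Proof.
by apply/existsP/existsP => -[e /and3P [He H1 H2]]; exists e; rewrite He H1 H2.
Qed.

Lemma disc_decomp : ~ hconnected br x y -> decomposable br.
Proof.
move=> Hnc.
have [u0 [v0 Hn]] : exists u0 v0, ~~ connect (hadj br x y) u0 v0.
  case: (boolP [exists u0 : ('I_q + 'I_p)%type, exists v0 : ('I_q + 'I_p)%type,
                 ~~ connect (hadj br x y) u0 v0]).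
    by move=> /existsP [u0 /existsP [v0 H]]; exists u0, v0.
  move=> /existsPn H; case: Hnc => u v.
  by have /existsPn /(_ v) := H u; rewrite negbK.
pose P := connect (hadj br x y) u0.
have HAB : (<<[seq vec x y w | w <- enum P]>> + <<[seq vec x y w | w <- enum (predC P)]>>)%VS = fullv.
  apply: subv_anti; apply/andP; split; first exact: subvf.
  rewrite (full_span Had) -span_cat; apply: sub_span => u /mem_vec [w ->].
  rewrite mem_cat; case: (boolP (w \in P)) => H.
    by rewrite map_f // mem_enum.
  by rewrite orbC map_f // mem_enum inE.
exists <<[seq vec x y w | w <- enum P]>>%VS, <<[seq vec x y w | w <- enum (predC P)]>>%VS.
split => //.
- apply/eqP => HA.
  have : vec x y u0 \in <<[seq vec x y w | w <- enum P]>>%VS.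
    by apply: memv_span; apply: map_f; rewrite mem_enum /P inE connect0.
  by rewrite HA memv0 (negbTE (vec_neq0 Had u0)).
- apply/eqP => HB.
  have : vec x y v0 \in <<[seq vec x y w | w <- enum (predC P)]>>%VS.
    by apply: memv_span; apply: map_f; rewrite mem_enum !inE.
  by rewrite HB memv0 (negbTE (vec_neq0 Had v0)).
- apply/eqP; rewrite -dimv_eq0.
  have := dimv_sum_cap <<[seq vec x y w | w <- enum P]>>%VS
                       <<[seq vec x y w | w <- enum (predC P)]>>%VS.
  have HA := dim_span [seq vec x y w | w <- enum P].
  have HB := dim_span [seq vec x y w | w <- enum (predC P)].
  rewrite !size_map -!cardE in HA HB.
  have HC := cardC P.
  rewrite card_sum !card_ord in HC.
  case: Had => Hb _ _ _.
  have Hd := size_basis (Hb : basis_of fullv (in_tuple (x ++ y))).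
  rewrite size_cat !size_tuple in Hd.
  have {}HB : (_ <= #|[predC P]|)%N := HB.
  rewrite HAB Hd; move: HA HB HC; lia.
- split; apply: ideal_closed => //.
    by move=> w w' Hw Pw; apply: connect_trans Pw (connect1 Hw).
  move=> w w'; rewrite !inE => Hw /negP Hn'; apply/negP => Hc; apply: Hn'.
  by apply: connect_trans Hc (connect1 _); rewrite hadj_sym.
Qed.

End Conn2.

Section CoordSide.
Variables (F : fieldType) (V : vectType F).

Lemma coord_side (A B : {vspace V}) n (y : n.-tuple V) w (l : 'I_n) :
  free y -> (A :&: B = 0)%VS -> (forall l : 'I_n, y`_l \in A \/ y`_l \in B) ->
  w \in A -> w \in <<y>>%VS -> coord y l w != 0 -> y`_l \in A.
Proof.
move=> Hf HAB Hs HwA Hwy Hc; apply/negP => Hl.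
pose c (i : 'I_n) := coord y i w.
have Ew := coord_span Hwy.
pose k (i : 'I_n) := if y`_i \in A then 0 else c i.
have Hk : \sum_(i < n) k i *: y`_i = 0.
  apply/eqP; rewrite -memv0 -HAB memv_cap; apply/andP; split.
    have -> : \sum_(i < n) k i *: y`_i = w - \sum_(i < n) (if y`_i \in A then c i else 0) *: y`_i.
      rewrite {1}Ew -sumrB; apply: eq_bigr => i _; rewrite /k.
      by case: ifP => _; rewrite ?scale0r ?subrr ?subr0.
    rewrite memvB // memv_suml // => i _.
    by case: ifP => H; rewrite ?scale0r ?mem0v ?memvZ.
  rewrite memv_suml // => i _; rewrite /k.
  case: ifP => H; rewrite ?scale0r ?mem0v // memvZ //.
  by case: (Hs i) => // H'; rewrite H' in H.
move/freeP: Hf => Hf.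
by have := Hf k Hk l; rewrite /k ifF; [move=> /eqP; rewrite (negbTE Hc) | apply/negP].
Qed.

End CoordSide.

Section Decomp.
Variables (F : fieldType) (V : vectType F) (br : V -> V -> V) (q p : nat)
  (x0 : q.-tuple V) (y0 : p.-tuple V).
Hypothesis Hbr : two_step_bracket br.
Hypothesis Had : admissible_bases br x0 y0.
Variables (A B : {vspace V}).
Hypotheses (nA : A != 0%VS) (nB : B != 0%VS) (HAB : (A + B)%VS = fullv)
  (HcAB : (A :&: B)%VS = 0%VS) (iA : is_ideal br A) (iB : is_ideal br B).

Local Notation Z := <<tval y0>>%VS.

Lemma AB0 u : u \in A -> u \in B -> u = 0.
Proof. by move=> Ha Hb; apply/eqP; rewrite -memv0 -HcAB memv_cap Ha Hb. Qed.

Lemma cross a b : a \in A -> b \in B -> br a b = 0.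
Proof.
move=> Ha Hb; apply: AB0; first exact: iA.
by rewrite (brN Hbr) memvN; apply: iB.
Qed.

Lemma cross' a b : a \in B -> b \in A -> br a b = 0.
Proof. by move=> Ha Hb; rewrite (brN Hbr) cross ?oppr0. Qed.

Lemma centZ u v : u \in Z -> br u v = 0.
Proof. by move=> H; apply: (cent Had v H). Qed.

Lemma centZ' u v : u \in Z -> br v u = 0.
Proof. by move=> Hu; rewrite (brN Hbr) centZ ?oppr0. Qed.

Lemma brZ u v : br u v \in Z.
Proof. exact: br_in_y Hbr Had u v. Qed.

Definition xs := vbasis (A :\: Z) ++ vbasis (B :\: Z).

Lemma xs_side u : u \in xs -> u \in A \/ u \in B.
Proof.
rewrite mem_cat => /orP [] /vbasis_mem H; [left|right];
  exact: (subvP (diffvSl _ _) _ H).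
Qed.

Lemma span_xs : <<xs>>%VS = ((A :\: Z) + (B :\: Z))%VS.
Proof. by rewrite span_cat !(span_basis (vbasisP _)). Qed.

Lemma Hfull : (fullv <= <<xs>> + Z)%VS.
Proof.
rewrite -HAB span_xs subv_add; apply/andP; split.
  apply: subv_trans (addvSl A Z) _; rewrite -addv_diff.
  by apply: addvS => //; apply: addvSl.
apply: subv_trans (addvSl B Z) _; rewrite -addv_diff.
by apply: addvS => //; apply: addvSr.
Qed.

Definition L := [seq br u v | u <- xs, v <- xs].

Lemma br_L u v : br u v \in <<L>>%VS.
Proof.
have /memv_addP [u1 Hu1 [z1 Hz1 ->]] := subvP Hfull u (memvf u).
have /memv_addP [v1 Hv1 [z2 Hz2 ->]] := subvP Hfull v (memvf v).
rewrite (brDl Hbr) (centZ _ Hz1) addr0 (brDr Hbr) (centZ' _ Hz2) addr0.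
apply: (span_ind (P := fun u1 => forall v1, v1 \in <<xs>>%VS -> br u1 v1 \in <<L>>%VS)) u1 Hu1 v1 Hv1.
- by move=> v1 _; rewrite (br0l Hbr) mem0v.
- by move=> c a1 a2 H1 H2 v1 Hv1; rewrite (brlin_l Hbr) memvD // ?memvZ // ?H1 ?H2.
move=> a Ha v1 Hv1.
apply: (span_ind (P := fun v1 => br a v1 \in <<L>>%VS)) v1 Hv1.
- by rewrite (br0r Hbr) mem0v.
- by move=> c b1 b2 H1 H2; rewrite (brlin_r Hbr) memvD // memvZ.
by move=> b Hb; apply: memv_span; apply: allpairs_f.
Qed.

Lemma Z_L : (Z <= <<L>>)%VS.
Proof.
apply/span_subvP => u /tnthP [k ->]; rewrite (tnth_nth 0).
case: Had => _ _ _ /(_ k) [i [j [Hne Hed]]].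
set b := br x0`_i x0`_j in Hne *.
have Eb : b = coord y0 k b *: y0`_k.
  have Hb : b \in Z by apply: brZ.
  rewrite {1}(coord_span Hb) (bigD1 k) //= big1 ?addr0 // => l Hl.
  case: (eqVneq (coord y0 l b) 0) => [->|Hc]; first by rewrite scale0r.
  have : inr l \in hedge br x0 y0 i j.
    by apply/setUP; right; apply/imsetP; exists l => //; rewrite inE.
  rewrite Hed !inE => /orP [/orP [] |] //= /eqP [] Hlk.
  by rewrite Hlk eqxx in Hl.
have Hck : coord y0 k b != 0.
  by apply: contraNneq Hne => Hc; rewrite Eb Hc scale0r.
have -> : y0`_k = (coord y0 k b)^-1 *: b by rewrite {2}Eb scalerA mulVf ?scale1r.
by apply: memvZ; apply: br_L.
Qed.

Lemma L_Z : (<<L>> <= Z)%VS.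
Proof. by apply/span_subvP => u /allpairsP [[a b] [_ _ ->]]; apply: brZ. Qed.

Lemma LZ : <<L>>%VS = Z.
Proof. by apply: subv_anti; rewrite L_Z Z_L. Qed.

Definition ys := extract L.

Lemma ys_span : <<ys>>%VS = Z.
Proof. by rewrite extract_span LZ. Qed.

Lemma Z_split : (Z <= (A :&: Z) + (B :&: Z))%VS.
Proof.
rewrite -{1}LZ; apply/span_subvP => u /allpairsP [[a b] [Ha Hb ->]] /=.
case: (xs_side Ha) => Ha'; case: (xs_side Hb) => Hb'.
- apply: (subvP (addvSl _ _)); rewrite memv_cap; apply/andP; split; [exact: iA | exact: brZ].
- by rewrite cross // mem0v.
- by rewrite cross' // mem0v.
- apply: (subvP (addvSr _ _)); rewrite memv_cap; apply/andP; split; [exact: iB | exact: brZ].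
Qed.

Lemma size_xs_ys : size xs = q /\ size ys = p.
Proof.
have dZ : \dim Z = p.
  case: Had => _ Hf _ _.
  have Hb : basis_of Z y0 by rewrite /basis_of eqxx Hf.
  exact: size_basis Hb.
have dfull : \dim (fullv : {vspace V}) = (q + p)%N.
  case: Had => Hb _ _ _.
  have Hd := size_basis (Hb : basis_of fullv (in_tuple (x0 ++ y0))).
  by rewrite size_cat !size_tuple in Hd.
have dsplit : \dim Z = (\dim (A :&: Z) + \dim (B :&: Z))%N.
  have E : Z = ((A :&: Z) + (B :&: Z))%VS.
    by apply: subv_anti; rewrite Z_split subv_add !capvSr.
  have := dimv_sum_cap (A :&: Z) (B :&: Z).
  have : \dim ((A :&: Z) :&: (B :&: Z)) = 0%N.
    apply/eqP; rewrite dimv_eq0 -subv0 -HcAB.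
    by apply: capvS; apply: capvSl.
  by move=> ->; rewrite -E addn0.
have dA := dimv_cap_compl A Z.
have dB := dimv_cap_compl B Z.
have dAB := dimv_sum_cap A B.
rewrite HAB HcAB dimv0 dfull in dAB.
have sx : size xs = (\dim (A :\: Z) + \dim (B :\: Z))%N.
  by rewrite size_cat !size_tuple.
have sy : size ys = \dim Z.
  have Hb : basis_of Z (in_tuple ys) by rewrite /basis_of ys_span eqxx extract_free.
  by rewrite (size_basis Hb).
split; lia.
Qed.


Lemma dfull : \dim (fullv : {vspace V}) = (q + p)%N.
Proof.
case: Had => Hb _ _ _.
have Hd := size_basis (Hb : basis_of fullv (in_tuple (x0 ++ y0))).
by rewrite size_cat !size_tuple in Hd.
Qed.

Lemma decomp_disc : exists (x : q.-tuple V) (y : p.-tuple V),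
  admissible_bases br x y /\ ~ hconnected br x y.
Proof.
have [sx sy] := size_xs_ys.
have sx' : size xs == q by rewrite sx.
have sy' : size ys == p by rewrite sy.
pose x := Tuple sx'; pose y := Tuple sy'.
exists x, y.
have ys_sub : forall k : 'I_p, exists i j : 'I_q, y`_k = br x`_i x`_j.
  move=> k; have Hk : ys`_k \in ys by apply: mem_nth; rewrite sy.
  have /extract_sub /allpairsP [[a b] [Ha Hb E]] := Hk.
  have [i Hi Ea] := nthP 0 Ha; have [j Hj Eb] := nthP 0 Hb.
  rewrite sx in Hi Hj; exists (Ordinal Hi), (Ordinal Hj).
  by rewrite /= Ea Eb; exact: E.
have yfree : free y := extract_free L.
have Hadm : admissible_bases br x y.
  split.
  - rewrite basisEdim span_cat ys_span Hfull /= size_cat sx sy dfull.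
    exact: leqnn.
  - exact: yfree.
  - by rewrite /= ys_span; case: Had.
  - move=> k; have [i [j E]] := ys_sub k; exists i, j; split.
      by rewrite -E; apply: (free_not0 yfree); apply: mem_nth; rewrite size_tuple.
    rewrite /hedge.
    have -> : [set @inr 'I_q 'I_p k0 | k0 : 'I_p & coord y k0 (br x`_i x`_j) != 0] = [set @inr 'I_q 'I_p k].
      apply/setP => w'; apply/imsetP/set1P => [[l]|->].
        rewrite inE -E coord_free //.
        by case: (eqVneq k l) => [->|_] //; rewrite eqxx.
      by exists k; rewrite // inE -E coord_free // eqxx oner_neq0.
    by apply/setP => w; rewrite !inE.
split => //.
have vside : forall w, vec x y w \in A \/ vec x y w \in B.
  case=> [i|k] /=.
    by apply: xs_side; apply: mem_nth; rewrite sx.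
  have [i [j ->]] := ys_sub k.
  have Hi : x`_i \in xs by apply: mem_nth; rewrite sx.
  by case: (xs_side Hi) => H; [left; apply: iA | right; apply: iB].
have nz : forall w, vec x y w != 0 := vec_neq0 Hadm.
have notA : forall u, u \in B -> u != 0 -> u \notin A.
  by move=> u Hb Hn; apply: contra Hn => Ha; apply/eqP; apply: AB0.
have ysides : forall l : 'I_p, y`_l \in A \/ y`_l \in B := fun l => vside (inr l).
have ysidesB : forall l : 'I_p, y`_l \in B \/ y`_l \in A.
  by move=> l; case: (ysides l); [right|left].
have Hcl : forall w w', hadj br x y w w' -> (vec x y w \in A) = (vec x y w' \in A).
  move=> w w' /existsP [e /and3P [He Hw Hw']].
  move/imsetP: He => [[i j]]; rewrite inE /= => Hne Ee; rewrite {}Ee in Hw Hw'.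
  suff S : forall w0, w0 \in hedge br x y i j -> (vec x y w0 \in A) = (x`_i \in A).
    by rewrite (S w) ?(S w').
  move=> w0; rewrite /hedge => /setUP [| /imsetP [l Hl ->]].
    rewrite !inE => /orP [] /eqP -> //=.
    case: (vside (inl i)) (vside (inl j)) => /= Hi [] Hj.
    - by rewrite Hi Hj.
    - by rewrite cross ?eqxx in Hne.
    - by rewrite cross' ?eqxx in Hne.
    - by rewrite (negbTE (notA _ Hi (nz (inl i)))) (negbTE (notA _ Hj (nz (inl j)))).
  rewrite inE in Hl; rewrite /=.
  have Hbz : br x`_i x`_j \in <<y>>%VS by rewrite /= ys_span; apply: brZ.
  case: (vside (inl i)) => /= Hi.
    by rewrite Hi; apply: (coord_side yfree HcAB ysides (iA _ Hi) Hbz Hl).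
  have HcBA : (B :&: A)%VS = 0%VS by rewrite capvC.
  have HyB := coord_side yfree HcBA ysidesB (iB _ Hi) Hbz Hl.
  rewrite (negbTE (notA _ Hi (nz (inl i)))).
  exact: negbTE (notA _ HyB (nz (inr l))).
move=> Hcon.
have [w1 Hw1] : exists w, vec x y w \in A.
  case: (boolP [exists w : ('I_q + 'I_p)%type, vec x y w \in A]) => [/existsP //|/existsPn Hn].
  exfalso; move/eqP: nA; apply; apply/eqP; rewrite -subv0 -HcAB subv_cap subvv /=.
  apply: subv_trans (subvf A) _; rewrite (full_span Hadm); apply/span_subvP => u /mem_vec [w ->].
  by case: (vside w) => // H; move: (Hn w); rewrite H.
have [w2 Hw2] : exists w, vec x y w \notin A.
  case: (boolP [exists w : ('I_q + 'I_p)%type, vec x y w \notin A]) => [/existsP //|/existsPn Hn].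
  exfalso; move/eqP: nB; apply; apply/eqP; rewrite -subv0 -HcAB subv_cap subvv andbT.
  apply: subv_trans (subvf B) _; rewrite (full_span Hadm); apply/span_subvP => u /mem_vec [w ->].
  by move: (Hn w); rewrite negbK.
have Hclosed : closed (hadj br x y) [pred w | vec x y w \in A].
  by move=> u v /Hcl; rewrite !inE.
have := closed_connect Hclosed (Hcon w1 w2).
by rewrite !inE Hw1 (negbTE Hw2).
Qed.

End Decomp.

Theorem proposition3 (R : realType) (V : vectType R[i]) (br : V -> V -> V)
    (q p : nat) :
  (2 <= q)%N -> (2 <= p)%N ->
  two_step_bracket br ->
  (exists (x : q.-tuple V) (y : p.-tuple V), admissible_bases br x y) ->
  decomposable br <->
  exists (x : q.-tuple V) (y : p.-tuple V),
    admissible_bases br x y /\ ~ hconnected br x y.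
Proof.
move=> _ _ Hbr [x0 [y0 Had]]; split.
  move=> [A [B [nA nB HAB HcAB [iA iB]]]].
  exact: (decomp_disc Hbr Had nA nB HAB HcAB iA iB).
move=> [x [y [Hadm Hnc]]].
exact: (disc_decomp Hbr Hadm Hnc).
Qed.
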